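(* Let $C\subset\mathbb{R}^2$ be a strictly convex body and $S\subset\mathbb{R}^2$ a finite point set in $C$-general position. Let $C'$ be a homothet of $C$ whose boundary contains exactly two points $p,q$ of $S$. Then $p$ and $q$ are joined by a path in $D_C(S)$ (with edges drawn as straight segments) that lies entirely in $C'$.
   Context: A convex body is a convex compact set with nonempty interior; it is strictly convex if its boundary contains no segment of positive length. A homothet of $C$ is $\lambda C+x$ with $\lambda>0$. $S$ is in $C$-general position if the boundary of every homothet of $C$ contains at most $4$ points of $S$. The Delaunay graph $D_C(S)$ has vertex set $S$, with $p,q$ adjacent iff some homothet of $C$ contains $p$ and $q$ and no other point of $S$. *)

(* Defs.v *)
From HB Require Import structures.
From mathcomp Require Import all_boot all_order all_algebra.
From mathcomp Require Import all_classical all_reals all_analysis.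
Set Implicit Arguments. Unset Strict Implicit. Unset Printing Implicit Defensive.
Import Order.TTheory GRing.Theory Num.Theory.
Import numFieldNormedType.Exports.
Local Open Scope classical_set_scope.
Local Open Scope ring_scope.

Notation pt R := (R * R)%type.
Section Defs.
Variable R : realType.
Local Notation pt := (R * R)%type.

Definition padd (a b : pt) : pt := (a.1 + b.1, a.2 + b.2).
Definition pscale (l : R) (a : pt) : pt := (l * a.1, l * a.2).

Definition segment (a b : pt) : set pt :=
  [set x | exists t : R, 0 <= t <= 1 /\ x = padd (pscale t a) (pscale (1 - t) b)].

Definition convex_set (A : set pt) : Prop :=
  forall a b, A a -> A b -> segment a b `<=` A.

Definition convex_body (C : set pt) : Prop :=
  [/\ convex_set C, compact C & interior C !=set0].

Definition boundary (A : set pt) : set pt := closure A `\` interior A.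

Definition strictly_convex_body (C : set pt) : Prop :=
  convex_body C /\
  forall a b : pt, a <> b -> ~ (segment a b `<=` boundary C).

Definition homothet (C : set pt) (lam : R) (x : pt) : set pt :=
  [set padd (pscale lam c) x | c in C].

Definition general_position (C : set pt) (S : seq pt) : Prop :=
  forall (lam : R) (x : pt), 0 < lam ->
    (size [seq p <- S | `[< boundary (homothet C lam x) p >]] <= 4)%N.

Definition delaunay_adj (C : set pt) (S : seq pt) (p q : pt) : Prop :=
  [/\ p \in S, q \in S, p <> q &
   exists (lam : R) (x : pt), 0 < lam /\
     homothet C lam x p /\ homothet C lam x q /\
     forall r, r \in S -> homothet C lam x r -> r = p \/ r = q].
End Defs.

(* Main.v *)
Require Import Defs.
From HB Require Import structures.
From mathcomp Require Import all_boot all_order all_algebra.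
From mathcomp Require Import all_classical all_reals all_analysis.
From mathcomp Require Import ring lra.
Import Order.TTheory GRing.Theory Num.Theory.
Import numFieldNormedType.Exports.
Local Open Scope classical_set_scope.
Local Open Scope ring_scope.

Section Geo.
Variable R : realType.
Local Notation P := (R * R)%type.

Definition inn (K : set P) (k : P) := exists2 e : R, 0 < e &
  forall k' : P, `|k'.1 - k.1| < e -> `|k'.2 - k.2| < e -> K k'.
Definition clo (K : set P) := forall k : P,
  (forall e : R, 0 < e -> exists a, K a /\ `|a.1 - k.1| < e /\ `|a.2 - k.2| < e) -> K k.
Definition cvx (K : set P) := forall (a b : P) (t : R), K a -> K b -> 0 <= t <= 1 ->
  K (t * a.1 + (1 - t) * b.1, t * a.2 + (1 - t) * b.2).
Definition bnd (K : set P) := exists M : R, forall k, K k -> `|k.1| <= M /\ `|k.2| <= M.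
Definition sc (K : set P) := forall (a b : P) (th : R), K a -> K b -> a <> b -> 0 < th < 1 ->
  inn K ((1 - th) * a.1 + th * b.1, (1 - th) * a.2 + th * b.2).
Definition good K := [/\ clo K, cvx K, bnd K & sc K].

Definition aff (m : R) (b : P) (K : set P) : set P :=
  fun k => K ((k.1 - b.1) / m, (k.2 - b.2) / m).

Lemma pairE (k : P) : k = (k.1, k.2). Proof. by case: k. Qed.

Lemma divdiff (u v c m e : R) : 0 < m -> `|u - v| < e * m -> `|(u - c) / m - (v - c) / m| < e.
Proof.
move=> m0 h; have -> : (u - c) / m - (v - c) / m = (u - v) / m by field; rewrite gt_eqF.
rewrite normrM (gtr0_norm (x := m^-1)) ?invr_gt0 //.
by rewrite ltr_pdivrMr.
Qed.

Lemma inn_aff m b K k : 0 < m -> inn K ((k.1 - b.1) / m, (k.2 - b.2) / m) -> inn (aff m b K) k.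
Proof.
move=> m0 [e e0 H]; exists (e * m); first exact: mulr_gt0.
move=> k' h1 h2; apply: H => /=.
- exact: divdiff.
- exact: divdiff.
Qed.

Lemma good_aff m b K : 0 < m -> good K -> good (aff m b K).
Proof.
move=> m0 [Kc Kv Kb Ks]; have mn0 : m != 0 by rewrite gt_eqF.
split.
- move=> k H; apply: Kc => e e0.
  have [a [Ha [h1 h2]]] := H (e * m) (mulr_gt0 e0 m0).
  exists ((a.1 - b.1) / m, (a.2 - b.2) / m); split => //=; split.
  + exact: divdiff.
  + exact: divdiff.
- move=> a c t Ha Hc ht; rewrite /aff /=.
  have := Kv _ _ t Ha Hc ht => /=.
  congr K; congr pair; field; done.
- case: Kb => M HM; exists (m * M + `|b.1| + `|b.2|) => k /HM /= [h1 h2].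
  have e1 : k.1 = m * ((k.1 - b.1) / m) + b.1 by field.
  have e2 : k.2 = m * ((k.2 - b.2) / m) + b.2 by field.
  split.
  + rewrite e1; apply: (le_trans (ler_normD _ _)); rewrite normrM gtr0_norm //.
    have : m * `|(k.1 - b.1) / m| <= m * M by rewrite ler_pM2l.
    have : 0 <= `|b.2| by []. lra.
  + rewrite e2; apply: (le_trans (ler_normD _ _)); rewrite normrM gtr0_norm //.
    have : m * `|(k.2 - b.2) / m| <= m * M by rewrite ler_pM2l.
    have : 0 <= `|b.1| by []. lra.
- move=> a c th Ha Hc ac th01; apply: inn_aff => //.
  have ne : ((a.1 - b.1) / m, (a.2 - b.2) / m) <> ((c.1 - b.1) / m, (c.2 - b.2) / m).
    case=> e1 e2; apply: ac; rewrite [a]pairE [c]pairE; congr pair.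
    + move/(congr1 (fun z => z * m)): e1; rewrite !mulfVK // => /eqP.
      by rewrite (can_eq (subrK _)) => /eqP.
    + move/(congr1 (fun z => z * m)): e2; rewrite !mulfVK // => /eqP.
      by rewrite (can_eq (subrK _)) => /eqP.
  have := Ks _ _ th Ha Hc ne th01 => /=.
  congr inn; congr pair; field; done.
Qed.


Definition hom (z : P) (t : R) (K : set P) := aff t ((1 - t) * z.1, (1 - t) * z.2) K.

Lemma aff_comp a b c d K k : a != 0 -> c != 0 ->
  aff a b (aff c d K) k <-> aff (a * c) (a * d.1 + b.1, a * d.2 + b.2) K k.
Proof.
move=> a0 c0; rewrite /aff /=.
have -> : ((k.1 - b.1) / a - d.1) / c = (k.1 - (a * d.1 + b.1)) / (a * c) by field; apply/andP.
have -> : ((k.2 - b.2) / a - d.2) / c = (k.2 - (a * d.2 + b.2)) / (a * c) by field; apply/andP.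
by [].
Qed.

Lemma hom_comp z r t K k : r != 0 -> t != 0 ->
  hom z r (hom z t K) k <-> hom z (r * t) K k.
Proof.
move=> r0 t0; rewrite /hom /aff /=.
have -> : ((k.1 - (1 - r) * z.1) / r - (1 - t) * z.1) / t = (k.1 - (1 - r * t) * z.1) / (r * t) by field; apply/andP.
have -> : ((k.2 - (1 - r) * z.2) / r - (1 - t) * z.2) / t = (k.2 - (1 - r * t) * z.2) / (r * t) by field; apply/andP.
by [].
Qed.

Lemma hom1 z K k : hom z 1 K k <-> K k.
Proof. by rewrite /hom /aff /= subrr !mul0r !subr0 !divr1 -pairE. Qed.

Lemma hom_center z t K : t != 0 -> K z -> hom z t K z.
Proof.
move=> t0 Kz; rewrite /hom /aff /=.
have -> : (z.1 - (1 - t) * z.1) / t = z.1 by field.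
have -> : (z.2 - (1 - t) * z.2) / t = z.2 by field.
by rewrite -pairE.
Qed.

Lemma hom_sub z t K k : cvx K -> K z -> 0 < t <= 1 -> hom z t K k -> K k.
Proof.
move=> Kv Kz /andP[t0 t1] Hk.
have := Kv _ _ t Hk Kz; rewrite t1 ltW //= => /(_ isT).
have t0' : t != 0 by rewrite gt_eqF.
have -> : t * ((k.1 - (1 - t) * z.1) / t) + (1 - t) * z.1 = k.1 by field.
have -> : t * ((k.2 - (1 - t) * z.2) / t) + (1 - t) * z.2 = k.2 by field.
by rewrite -pairE.
Qed.

Lemma small_ratio (d d' w dd e : R) : 0 < e -> 1 <= dd -> `|w| <= dd -> 0 < d' <= d ->
  d * (4 * dd + 2 * e) = e -> `|d' * w / (1 - d')| < e.
Proof.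
move=> e0 dd1 wdd /andP[d'0 d'd] hd.
have d0 : 0 < d by lra.
have dlt : d * (dd + e) < e by rewrite -{2}hd ltr_pM2l //; lra.
have d1 : d < 1 by nra.
have pos : 0 < 1 - d' by lra.
rewrite normrM (gtr0_norm (x := (1 - d')^-1)) ?invr_gt0 // ltr_pdivrMr //.
rewrite normrM gtr0_norm //.
have : d' * `|w| <= d * dd by apply: ler_pM => //; lra.
nra.
Qed.

Lemma F4 K k c : inn K k -> exists2 d : R, 0 < d < 1 &
  forall d', 0 < d' <= d -> hom c (1 - d') K k.
Proof.
case=> e e0 H.
set dd := `|k.1 - c.1| + `|k.2 - c.2| + 1.
have dd1 : 1 <= dd by rewrite /dd; have := normr_ge0 (k.1 - c.1); have := normr_ge0 (k.2 - c.2); lra.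
have den : 0 < 4 * dd + 2 * e by lra.
set d := e / (4 * dd + 2 * e).
have hd : d * (4 * dd + 2 * e) = e by rewrite /d mulfVK // gt_eqF.
have d0 : 0 < d by rewrite /d divr_gt0.
exists d.
  apply/andP; split => //.
  by rewrite /d ltr_pdivrMr // mul1r; lra.
move=> d' hd'.
have hd'' := hd'; case/andP: hd'' => d'0 d'd.
have d'1 : 1 - d' != 0.
  have : d * (dd + e) < e by rewrite -{2}hd ltr_pM2l //; lra.
  move=> h; apply/eqP => h'; nra.
rewrite /hom /aff /=; apply: H => /=.
- have -> : (k.1 - (1 - (1 - d')) * c.1) / (1 - d') - k.1 = d' * (k.1 - c.1) / (1 - d') by field.
  apply: (@small_ratio d d' _ dd e) => //.
  rewrite /dd; have := normr_ge0 (k.2 - c.2); lra.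
- have -> : (k.2 - (1 - (1 - d')) * c.2) / (1 - d') - k.2 = d' * (k.2 - c.2) / (1 - d') by field.
  apply: (@small_ratio d d' _ dd e) => //.
  rewrite /dd; have := normr_ge0 (k.1 - c.1); lra.
Qed.

Lemma F5 K c x r : good K -> K c -> c <> x -> ~ inn K x -> 0 < r < 1 -> ~ hom c r K x.
Proof.
case=> _ _ _ Ks Kc cx nx r01 Hx; apply: nx.
have r0 : r != 0 by case/andP: r01 => h _; rewrite gt_eqF.
have cq : c <> ((x.1 - (1 - r) * c.1) / r, (x.2 - (1 - r) * c.2) / r).
  move=> h; have /= e1 := congr1 fst h; have /= e2 := congr1 snd h.
  apply: cx; rewrite [c]pairE [x]pairE; congr pair.
  + have h1 : r * c.1 = x.1 - (1 - r) * c.1 by rewrite {1}e1; field.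
    have h2 : x.1 = r * c.1 + (1 - r) * c.1 by rewrite h1 subrK.
    by rewrite h2; ring.
  + have h1 : r * c.2 = x.2 - (1 - r) * c.2 by rewrite {1}e2; field.
    have h2 : x.2 = r * c.2 + (1 - r) * c.2 by rewrite h1 subrK.
    by rewrite h2; ring.
have := Ks _ _ r Kc Hx cq r01 => /=.
have -> : (1 - r) * c.1 + r * ((x.1 - (1 - r) * c.1) / r) = x.1 by field.
have -> : (1 - r) * c.2 + r * ((x.2 - (1 - r) * c.2) / r) = x.2 by field.
by rewrite -pairE.
Qed.

Lemma F8 K x r s : good K -> K x -> hom x r K s -> s <> x -> 0 < r < 1 -> inn K s.
Proof.
case=> _ _ _ Ks Kx Hs sx r01.
have r0 : r != 0 by case/andP: r01 => h _; rewrite gt_eqF.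
have cq : x <> ((s.1 - (1 - r) * x.1) / r, (s.2 - (1 - r) * x.2) / r).
  move=> h; have /= e1 := congr1 fst h; have /= e2 := congr1 snd h.
  apply: sx; rewrite [s]pairE [x]pairE; congr pair.
  + have h1 : r * x.1 = s.1 - (1 - r) * x.1 by rewrite {1}e1; field.
    have h2 : s.1 = r * x.1 + (1 - r) * x.1 by rewrite h1 subrK.
    by rewrite h2; ring.
  + have h1 : r * x.2 = s.2 - (1 - r) * x.2 by rewrite {1}e2; field.
    have h2 : s.2 = r * x.2 + (1 - r) * x.2 by rewrite h1 subrK.
    by rewrite h2; ring.
have := Ks _ _ r Kx Hs cq r01 => /=.
have -> : (1 - r) * x.1 + r * ((s.1 - (1 - r) * x.1) / r) = s.1 by field.
have -> : (1 - r) * x.2 + r * ((s.2 - (1 - r) * x.2) / r) = s.2 by field.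
by rewrite -pairE.
Qed.


Lemma fin_small (S : seq P) (Pr : P -> Prop) (Q : P -> R -> Prop) :
  (forall s, s \in S -> Pr s -> exists2 d : R, 0 < d & forall d', 0 < d' <= d -> Q s d') ->
  exists2 d : R, 0 < d & forall d', 0 < d' <= d -> forall s, s \in S -> Pr s -> Q s d'.
Proof.
elim: S => [|s S IH] H.
  by exists 1 => // d' _ s; rewrite in_nil.
have [d1 d10 H1] : exists2 d : R, 0 < d & forall d', 0 < d' <= d -> forall s, s \in S -> Pr s -> Q s d'.
  by apply: IH => s' s'S; apply: H; rewrite in_cons s'S orbT.
case: (pselect (Pr s)) => [Ps|nPs].
- have [d2 d20 H2] := H s (mem_head _ _) Ps.
  exists (Num.min d1 d2); first by rewrite lt_min d10 d20.
  move=> d' /andP[d'0]; rewrite le_min => /andP[h1 h2] s'; rewrite in_cons => /orP[/eqP->|s'S] Ps'.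
  + by apply: H2; rewrite d'0 h2.
  + by apply: H1 => //; rewrite d'0 h1.
- exists d1 => // d' hd' s'; rewrite in_cons => /orP[/eqP->|s'S] Ps'; first by [].
  exact: H1.
Qed.

Lemma inn_hom_center K x t : 0 < t -> inn (hom x t K) x -> inn K x.
Proof.
move=> t0 [e e0 H]; exists (e / t); first by rewrite divr_gt0.
move=> k' h1 h2.
have t0' : t != 0 by rewrite gt_eqF.
have := H (x.1 + t * (k'.1 - x.1), x.2 + t * (k'.2 - x.2)) => /=.
have -> : x.1 + t * (k'.1 - x.1) - x.1 = t * (k'.1 - x.1) by ring.
have -> : x.2 + t * (k'.2 - x.2) - x.2 = t * (k'.2 - x.2) by ring.
have lt1 : forall w : R, `|w| < e / t -> `|t * w| < e.
  by move=> w hw; rewrite normrM gtr0_norm // mulrC -ltr_pdivlMr.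
move=> /(_ (lt1 _ h1) (lt1 _ h2)).
rewrite /hom /aff /=.
have -> : (x.1 + t * (k'.1 - x.1) - (1 - t) * x.1) / t = k'.1 by field.
have -> : (x.2 + t * (k'.2 - x.2) - (1 - t) * x.2) / t = k'.2 by field.
by rewrite -pairE.
Qed.

Lemma enlarge (K : set P) (S : seq P) (x : P) : clo K -> exists2 eps : R, 0 < eps &
  forall s, s \in S -> hom x (1 + eps) K s -> K s.
Proof.
move=> Kc.
have FS : forall s, s \in S -> ~ K s -> exists2 d : R, 0 < d &
    forall d', 0 < d' <= d -> ~ hom x (1 + d') K s.
  move=> s _ nKs.
  case: (pselect (exists2 e : R, 0 < e & forall a, K a -> ~ (`|a.1 - s.1| < e /\ `|a.2 - s.2| < e)))
    => [[e e0 He]|ne]; last first.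
    exfalso; apply: nKs; apply: Kc => e e0.
    case: (pselect (exists a, K a /\ `|a.1 - s.1| < e /\ `|a.2 - s.2| < e)) => // nn.
    by exfalso; apply: ne; exists e => // a Ka [h1 h2]; apply: nn; exists a.
  set dd := `|x.1 - s.1| + `|x.2 - s.2| + 1.
  have dd1 : 0 < dd by rewrite /dd; have := normr_ge0 (x.1 - s.1); have := normr_ge0 (x.2 - s.2); lra.
  exists (e / dd); first by rewrite divr_gt0.
  move=> d' /andP[d'0 d'd] Hs; apply: (He _ Hs) => /=.
  have hd : e / dd * dd = e by rewrite mulfVK // gt_eqF.
  have pd : 0 < 1 + d' by lra.
  have key : forall w : R, `|w| < dd -> `|d' * w / (1 + d')| < e.
    move=> w hw; rewrite normrM (gtr0_norm (x := (1 + d')^-1)) ?invr_gt0 // ltr_pdivrMr //.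
    rewrite normrM gtr0_norm //.
    have : d' * `|w| <= e / dd * `|w| by apply: ler_wpM2r.
    have : e / dd * `|w| < e / dd * dd by rewrite ltr_pM2l ?divr_gt0.
    nra.
  split.
  + have -> : (s.1 - (1 - (1 + d')) * x.1) / (1 + d') - s.1 = d' * (x.1 - s.1) / (1 + d') by field; rewrite gt_eqF.
    apply: key; rewrite /dd; have := normr_ge0 (x.2 - s.2); lra.
  + have -> : (s.2 - (1 - (1 + d')) * x.2) / (1 + d') - s.2 = d' * (x.2 - s.2) / (1 + d') by field; rewrite gt_eqF.
    apply: key; rewrite /dd; have := normr_ge0 (x.1 - s.1); lra.
have [d d0 H] := @fin_small S (fun s => ~ K s) (fun s d' => ~ hom x (1 + d') K s) FS.
exists d => // s sS Hs.
case: (pselect (K s)) => // nKs; exfalso.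
by apply: (H d _ s sS nKs); rewrite ?d0 ?lexx.
Qed.


Lemma shrink (K : set P) (S : seq P) (u s0 : P) : good K -> K u -> s0 \in S -> K s0 -> s0 <> u ->
  exists m : R, [/\ 0 < m <= 1, (forall s, s \in S -> K s -> hom u m K s) &
    exists x, [/\ x \in S, K x, x <> u & ~ inn (hom u m K) x]].
Proof.
move=> Kg; have [Kc Kv [M HM] Ks] := Kg; move=> Ku s0S Ks0 s0u.
set E := [set t : R | 0 < t <= 1 /\ forall s, s \in S -> K s -> hom u t K s].
have E1 : E 1 by split; [rewrite ltr01 lexx | move=> s _ Kss; apply/hom1].
have M0 : 0 <= M by have [h _] := HM u Ku; apply: le_trans h.
set num := `|s0.1 - u.1| + `|s0.2 - u.2|.
set den := 2 * M + `|u.1| + `|u.2| + 1.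
have den0 : 0 < den by rewrite /den; have := normr_ge0 u.1; have := normr_ge0 u.2; lra.
have num0 : 0 < num.
  case: (ltrP 0 num) => // h; exfalso; apply: s0u.
  have := normr_ge0 (s0.1 - u.1); have := normr_ge0 (s0.2 - u.2) => g2 g1.
  have /eqP : `|s0.1 - u.1| = 0 by rewrite /num in h; lra.
  have /eqP : `|s0.2 - u.2| = 0 by rewrite /num in h; lra.
  rewrite !normr_eq0 !subr_eq0 => /eqP e2 /eqP e1.
  by rewrite [s0]pairE [u]pairE e1 e2.
have lbE : forall t, E t -> num / den <= t.
  move=> t [/andP[t0 t1] Ht]; have := Ht s0 s0S Ks0; rewrite /hom /aff /= => Hq.
  have [b1 b2] := HM _ Hq; rewrite /= in b1 b2.
  have key : forall a c : R, `|(a - (1 - t) * c) / t| <= M -> `|a - c| <= t * (M + `|c|).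
    move=> a c h.
    have -> : a - c = t * ((a - (1 - t) * c) / t - c) by field; rewrite gt_eqF.
    rewrite normrM gtr0_norm //; apply: ler_wpM2l; first exact: ltW.
    by apply: (le_trans (ler_normB _ _)); rewrite lerD2r.
  have k1 := key _ _ b1; have k2 := key _ _ b2.
  rewrite ler_pdivrMr // /num /den; nra.
have hl : has_lbound E by exists (num / den) => t /lbE.
have hinf : has_inf E by split; [exists 1 | ].
set m := inf E.
have m_lb : num / den <= m by apply: lb_le_inf; [exists 1 | move=> t /lbE].
have m0 : 0 < m by apply: lt_le_trans m_lb; rewrite divr_gt0.
have m1 : m <= 1 by apply: ge_inf.
have mE : forall s, s \in S -> K s -> hom u m K s.
  move=> s sS Kss; apply: Kc => e e0.
  set dd := `|s.1 - u.1| + `|s.2 - u.2| + 1.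
  have dd0 : 0 < dd by rewrite /dd; have := normr_ge0 (s.1 - u.1); have := normr_ge0 (s.2 - u.2); lra.
  have eta0 : 0 < e * m * m / dd by rewrite divr_gt0 // !mulr_gt0.
  have [t Et tlt] := inf_adherent eta0 hinf.
  have mt : m <= t by apply: ge_inf.
  case: Et => [/andP[t0 t1] Ht].
  exists ((s.1 - (1 - t) * u.1) / t, (s.2 - (1 - t) * u.2) / t); split; first exact: Ht.
  have heta : e * m * m / dd * dd = e * m * m by rewrite mulfVK // gt_eqF.
  have key2 : forall a c : R, `|a - c| < dd ->
      `|(a - (1 - t) * c) / t - (a - (1 - m) * c) / m| < e.
    move=> a c h.
    have -> : (a - (1 - t) * c) / t - (a - (1 - m) * c) / m = (a - c) * (m - t) / (t * m).
      by field; rewrite !gt_eqF.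
    have tm0 : 0 < t * m by rewrite mulr_gt0.
    rewrite normrM (gtr0_norm (x := (t * m)^-1)) ?invr_gt0 // ltr_pdivrMr //.
    rewrite normrM (ler0_norm (x := m - t)); last by lra.
    have g := normr_ge0 (a - c).
    have : `|a - c| * (t - m) <= dd * (t - m) by apply: ler_wpM2r; lra.
    have : dd * (t - m) < e * m * m.
      by rewrite -heta mulrC ltr_pM2r //; lra.
    have : e * m * m <= e * t * m by apply: ler_wpM2r; [lra | apply: ler_wpM2l; lra].
    nra.
  split => /=; apply: key2; rewrite /dd.
  - have := normr_ge0 (s.2 - u.2); lra.
  - have := normr_ge0 (s.1 - u.1); lra.
have [x [xS Kx xu nix]] : exists x, [/\ x \in S, K x, x <> u & ~ inn (hom u m K) x].
  case: (pselect (exists x, [/\ x \in S, K x, x <> u & ~ inn (hom u m K) x])) => // nex; exfalso.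
  have allin : forall s, s \in S -> (K s /\ s <> u) -> inn (hom u m K) s.
    move=> s sS [Kss su]; case: (pselect (inn (hom u m K) s)) => // ni; exfalso.
    by apply: nex; exists s; split.
  have FS : forall s, s \in S -> (K s /\ s <> u) -> exists2 d : R, 0 < d &
      forall d', 0 < d' <= d -> hom u (1 - d') (hom u m K) s.
    move=> s sS Ps; have [d /andP[d0 _] Hd] := F4 _ _ u (allin s sS Ps); by exists d.
  have [d d0 Hd] := fin_small _ _ _ FS.
  set d' := Num.min d (1 / 2).
  have d'0 : 0 < d' by rewrite lt_min d0 /=; lra.
  have d'd : d' <= d by rewrite ge_min lexx.
  have d'h : d' <= 1 / 2 by rewrite ge_min lexx orbT.
  have : E ((1 - d') * m).
    split; first by apply/andP; split; nra.
    move=> s sS Kss; case: (pselect (s = u)) => [->|su].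
      by apply: hom_center => //; rewrite gt_eqF //; nra.
    apply/hom_comp; [rewrite gt_eqF //; lra | rewrite gt_eqF //|].
    by apply: Hd => //; rewrite d'0 d'd.
  move=> HE; have h := ge_inf hl HE; rewrite -/m in h.
  have hlt : (1 - d') * m < m by rewrite mulrBl mul1r gtrBl mulr_gt0.
  by move: hlt; rewrite ltNge h.
exists m; split => //; first by rewrite m0 m1.
by exists x; split.
Qed.


Lemma aff_ext a b (X Y : set P) k : (forall k, X k <-> Y k) -> aff a b X k <-> aff a b Y k.
Proof. by move=> h; rewrite /aff; apply: h. Qed.

Lemma aff_comp_ex a b (X : set P) c d K : 0 < a -> 0 < c -> (forall k, X k <-> aff c d K k) ->
  exists t (w : P), 0 < t /\ forall k, aff a b X k <-> aff t w K k.
Proof.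
move=> a0 c0 h; exists (a * c), (a * d.1 + b.1, a * d.2 + b.2); split; first exact: mulr_gt0.
move=> k; rewrite -aff_comp ?gt_eqF //; exact: aff_ext.
Qed.

Lemma removeR (K : set P) (S : seq P) (u s0 : P) : good K -> u \in S -> K u -> s0 \in S -> K s0 -> s0 <> u ->
  exists x, [/\ x \in S, K x, x <> u & exists t (w : P), 0 < t /\
    forall s, s \in S -> (aff t w K s <-> K s /\ s <> x)].
Proof.
move=> Kg uS Ku s0S Ks0 s0u.
have [Kc Kv _ _] := Kg.
have [m [/andP[m0 m1] Hm [x [xS Kx xu nix]]]] := shrink _ _ _ _ Kg Ku s0S Ks0 s0u.
set H1 := hom u m K.
have H1g : good H1 := good_aff _ _ _ m0 Kg.
have [H1c H1v _ _] := H1g.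
have [eps eps0 Heps] := enlarge H1 S x H1c.
have e1 : 0 < 1 + eps by lra.
set E2 := hom x (1 + eps) H1.
have E2g : good E2 := good_aff _ _ _ e1 H1g.
have [E2c E2v _ _] := E2g.
have H1x : H1 x := Hm x xS Kx.
have E2x : E2 x by apply: hom_center; rewrite ?gt_eqF.
have nix2 : ~ inn E2 x by move=> h; apply: nix; exact: (inn_hom_center _ _ _ e1 h).
set r0 := (1 + eps)^-1.
have r00 : 0 < r0 by rewrite invr_gt0.
have r01 : r0 < 1 by rewrite invf_lt1 //; lra.
have H1inE2 : forall k, H1 k -> hom x r0 E2 k.
  move=> k Hk; apply/hom_comp; rewrite ?gt_eqF //.
  by rewrite /r0 mulVf ?gt_eqF //; apply/hom1.
have H1subE2 : forall k, H1 k -> E2 k.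
  by move=> k Hk; apply: (hom_sub _ _ _ _ E2v E2x _ (H1inE2 k Hk)); rewrite r00 ltW.
have E2u : E2 u by apply: H1subE2; apply: Hm.
have FS : forall s, s \in S -> (K s /\ s <> x) -> exists2 d : R, 0 < d &
    forall d', 0 < d' <= d -> hom u (1 - d') E2 s.
  move=> s sS [Kss sx].
  have Hi : inn E2 s by apply: (F8 _ _ _ _ E2g E2x (H1inE2 s (Hm s sS Kss)) sx); rewrite r00 r01.
  by have [d /andP[d0 _] Hd] := F4 _ _ u Hi; exists d.
have [d d0 Hd] := fin_small _ _ _ FS.
set d' := Num.min d (1 / 2).
have d'0 : 0 < d' by rewrite lt_min d0 /=; lra.
have d'd : d' <= d by rewrite ge_min lexx.
have d'h : d' <= 1 / 2 by rewrite ge_min lexx orbT.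
have [t1 [w1 [t10 rep1]]] : exists t (w : P), 0 < t /\ forall k, E2 k <-> aff t w K k.
  rewrite /E2 /hom; apply: (aff_comp_ex _ _ _ m ((1 - m) * u.1, (1 - m) * u.2) K e1 m0) => k; by split => h.
have [t [w [t0 rep]]] : exists t (w : P), 0 < t /\ forall k, hom u (1 - d') E2 k <-> aff t w K k.
  rewrite /hom; apply: (aff_comp_ex _ _ _ _ _ _ _ t10 rep1); lra.
exists x; split => //; exists t, w; split => // s sS; rewrite -rep; split.
- move=> Hs.
  have E2s : E2 s by apply: (hom_sub _ _ _ _ E2v E2u _ Hs); apply/andP; split; lra.
  have H1s := Heps s sS E2s.
  split; first by apply: (hom_sub _ _ _ _ Kv Ku _ H1s); rewrite m0 m1.
  move=> sx; rewrite sx in Hs.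
  by apply: (F5 _ _ _ _ E2g E2u (fun h => xu (esym h)) nix2 _ Hs); apply/andP; split; lra.
- by case=> Kss sx; apply: Hd => //; rewrite d'0 d'd.
Qed.


Lemma box_nbhs (k : P) (B : set P) :
  nbhs k B <-> exists2 e : R, 0 < e & forall k', `|k'.1 - k.1| < e -> `|k'.2 - k.2| < e -> B k'.
Proof.
rewrite nbhs_ballP; split => -[e e0 H]; exists e => // k'.
- move=> h1 h2; apply: H. split => /=; rewrite /ball /= distrC; by [].
- case => /= h1 h2; apply: H; rewrite distrC //; rewrite distrC //.
Qed.

Lemma cl1 (A : set P) k : closure A k ->
  forall e, 0 < e -> exists a, A a /\ `|a.1 - k.1| < e /\ `|a.2 - k.2| < e.
Proof.
move=> Hc e e0.
have [a [Aa [h1 h2]]] := Hc [set k' | `|k'.1 - k.1| < e /\ `|k'.2 - k.2| < e]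
  (proj2 (box_nbhs _ _) (ex_intro2 _ _ e e0 (fun k' h1 h2 => conj h1 h2))).
by exists a.
Qed.

Lemma cl2 (A : set P) k :
  (forall e, 0 < e -> exists a, A a /\ `|a.1 - k.1| < e /\ `|a.2 - k.2| < e) -> closure A k.
Proof.
move=> H B /box_nbhs [e e0 HB].
have [a [Aa [h1 h2]]] := H e e0; exists a; split => //; exact: HB.
Qed.

Lemma IP K v y phi : cvx K -> inn K v -> K y -> 0 <= phi < 1 ->
  inn K (v.1 + phi * (y.1 - v.1), v.2 + phi * (y.2 - v.2)).
Proof.
move=> Kv [e e0 H] Ky /andP[p0 p1].
have q0 : 0 < 1 - phi by lra.
have q0' : 1 - phi != 0 by rewrite gt_eqF.
exists ((1 - phi) * e); first exact: mulr_gt0.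
move=> k' h1 h2.
have hv : K ((k'.1 - phi * y.1) / (1 - phi), (k'.2 - phi * y.2) / (1 - phi)).
  apply: H => /=.
  - have -> : (k'.1 - phi * y.1) / (1 - phi) - v.1 = (k'.1 - (v.1 + phi * (y.1 - v.1))) / (1 - phi) by field.
    by rewrite normrM (gtr0_norm (x := (1 - phi)^-1)) ?invr_gt0 // ltr_pdivrMr // [e * _]mulrC.
  - have -> : (k'.2 - phi * y.2) / (1 - phi) - v.2 = (k'.2 - (v.2 + phi * (y.2 - v.2))) / (1 - phi) by field.
    by rewrite normrM (gtr0_norm (x := (1 - phi)^-1)) ?invr_gt0 // ltr_pdivrMr // [e * _]mulrC.
have := Kv _ _ (1 - phi) hv Ky; rewrite (ltW q0) /= => /(_ _).
have -> : (1 - phi) * ((k'.1 - phi * y.1) / (1 - phi)) + (1 - (1 - phi)) * y.1 = k'.1 by field.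
have -> : (1 - phi) * ((k'.2 - phi * y.2) / (1 - phi)) + (1 - (1 - phi)) * y.2 = k'.2 by field.
rewrite -pairE; apply; lra.
Qed.

Lemma good_C (C : set P) : strictly_convex_body C -> good C.
Proof.
case=> -[Cconv Ccomp Cint] Hsc.
have Cv : cvx C.
  move=> a b t Ca Cb ht; apply: (Cconv a b Ca Cb); exists t; split => //.
have Ccl : closed C by apply: compact_closed => //; apply: norm_hausdorff.
split => //.
- move=> k H; apply: Ccl; exact: cl2.
- have := compact_bounded Ccomp; case=> M0 [_ HM].
  exists (M0 + 1) => k Ck; have := HM (M0 + 1); rewrite ltrDl ltr01 => /(_ isT _ Ck).
  rewrite /= prod_normE ge_max => /andP[h1 h2]; by split.
- move=> a b th Ca Cb ab /andP[th0 th1].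
  have [v [[t0 [/andP[t00 t01] ev]] nB]] : exists v, segment a b v /\ ~ boundary C v.
    case: (pselect (exists v, segment a b v /\ ~ boundary C v)) => // nex; exfalso.
    apply: (Hsc a b ab) => v Sv; case: (pselect (boundary C v)) => // nb.
    by exfalso; apply: nex; exists v.
  have Cvv : C v by apply: (Cconv a b Ca Cb); exists t0; rewrite t00 t01.
  have iv : interior C v.
    case: (pselect (interior C v)) => // ni; exfalso; apply: nB; split => //.
    exact: subset_closure.
  have inv : inn C v by move/box_nbhs: iv.
  have ev1 : v.1 = t0 * a.1 + (1 - t0) * b.1 by rewrite ev.
  have ev2 : v.2 = t0 * a.2 + (1 - t0) * b.2 by rewrite ev.
  clear ev Hsc Ccl Cint Cconv Ccomp nB iv ab; case: (ltgtP (1 - t0) th) => hc.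
  + (* v between a and w: w = v + phi (b - v) *)
    have t0p : t0 != 0 by apply/eqP => h; rewrite h in hc; lra.
    have := IP C v b ((th - (1 - t0)) / t0) Cv inv Cb.
    have -> : v.1 + (th - (1 - t0)) / t0 * (b.1 - v.1) = (1 - th) * a.1 + th * b.1.
      by rewrite ev1; field.
    have -> : v.2 + (th - (1 - t0)) / t0 * (b.2 - v.2) = (1 - th) * a.2 + th * b.2.
      by rewrite ev2; field.
    apply; apply/andP; split.
    * by apply: divr_ge0; lra.
    * rewrite ltr_pdivrMr ?lt_def ?t0p ?t00 //=; lra.
  + have t0p : 1 - t0 != 0 by apply/eqP => h; rewrite h in hc; lra.
    have := IP C v a (((1 - t0) - th) / (1 - t0)) Cv inv Ca.
    have -> : v.1 + ((1 - t0) - th) / (1 - t0) * (a.1 - v.1) = (1 - th) * a.1 + th * b.1.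
      by rewrite ev1; field.
    have -> : v.2 + ((1 - t0) - th) / (1 - t0) * (a.2 - v.2) = (1 - th) * a.2 + th * b.2.
      by rewrite ev2; field.
    apply; apply/andP; split.
    * by apply: divr_ge0; lra.
    * rewrite ltr_pdivrMr ?lt_def ?t0p //=; lra.
  + have -> : ((1 - th) * a.1 + th * b.1, (1 - th) * a.2 + th * b.2) = v.
      by rewrite [v]pairE ev1 ev2 -hc; congr pair; ring.
    exact: inv.
Qed.


Lemma hom_mem (C : set P) mu y k : mu != 0 -> (homothet C mu y k <-> aff mu y C k).
Proof.
move=> m0; split.
- case=> c Cc <-; rewrite /aff /padd /pscale /=.
  have -> : (mu * c.1 + y.1 - y.1) / mu = c.1 by field.
  have -> : (mu * c.2 + y.2 - y.2) / mu = c.2 by field.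
  by rewrite -pairE.
- move=> h; exists ((k.1 - y.1) / mu, (k.2 - y.2) / mu) => //.
  rewrite /padd /pscale /= [RHS]pairE; congr pair; field; done.
Qed.

Inductive reach (e : P -> P -> Prop) : P -> P -> Prop :=
| rr a : reach e a a
| rs a b c : e a b -> reach e b c -> reach e a c.

Lemma reach_trans e a b c : reach e a b -> reach e b c -> reach e a c.
Proof. elim=> // a' b' c' h _ IH hc; apply: rs h (IH hc). Qed.

Lemma reach_list e a b : reach e a b -> exists vs : seq P, last a vs = b /\
  forall i : nat, (i < size vs)%N -> e (nth a (a :: vs) i) (nth a (a :: vs) i.+1).
Proof.
elim=> [a'|a' b' c' h _ [vs [hl hv]]]; first by exists [::].
exists (b' :: vs); split => // -[|i] hi //.
have E : forall j, (j <= size vs)%N -> nth a' (b' :: vs) j = nth b' (b' :: vs) j.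
  by move=> j hj; apply: set_nth_default; rewrite /= ltnS.
change (e (nth a' (b' :: vs) i) (nth a' (b' :: vs) i.+1)).
rewrite !E //; last by rewrite /= ltnS in hi; rewrite ltnW.
exact: hv.
Qed.

Lemma count_le (S : seq P) (A B : P -> Prop) : (forall s, s \in S -> B s -> A s) ->
  (count (fun s => `[< B s >]) S <= count (fun s => `[< A s >]) S)%N.
Proof.
elim: S => [|s S IH] // hBA /=.
have h1 : (count (fun s => `[< B s >]) S <= count (fun s => `[< A s >]) S)%N.
  by apply: IH => z zS Bz; apply: hBA => //; rewrite in_cons zS orbT.
have : (`[< B s >] <= `[< A s >])%N.
  case: (boolP `[< B s >]) => // /asboolP Bs; rewrite (_ : `[< A s >] = true) //.
  by apply/asboolP; apply: hBA => //; rewrite mem_head.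
by move=> h2; apply: leq_add.
Qed.

Lemma count_lt (S : seq P) (A B : P -> Prop) x : (forall s, s \in S -> B s -> A s) ->
  x \in S -> A x -> ~ B x ->
  (count (fun s => `[< B s >]) S < count (fun s => `[< A s >]) S)%N.
Proof.
elim: S => [|s S IH] // hBA; rewrite in_cons => /orP[/eqP <-|xS] Ax nBx /=.
- have le : (count (fun s => `[< B s >]) S <= count (fun s => `[< A s >]) S)%N.
    by apply: count_le => z zS Bz; apply: hBA => //; rewrite in_cons zS orbT.
  have -> : `[< B x >] = false by apply/asboolP.
  have -> : `[< A x >] = true by apply/asboolP.
  by rewrite add0n add1n ltnS.
- have hlt : (count (fun s => `[< B s >]) S < count (fun s => `[< A s >]) S)%N.
    by apply: IH => // z zS Bz; apply: hBA => //; rewrite in_cons zS orbT.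
  have h2 : (`[< B s >] <= `[< A s >])%N.
    case: (boolP `[< B s >]) => // /asboolP Bs; rewrite (_ : `[< A s >] = true) //.
    by apply/asboolP; apply: hBA => //; rewrite mem_head.
  by rewrite (leq_ltn_trans (leq_add h2 (leqnn _))) // ltn_add2l.
Qed.


Lemma main_ind (C : set P) (S : seq P) (lam : R) (x : P) : good C -> 0 < lam ->
  forall (n : nat) (mu : R) (y : P), 0 < mu ->
  (forall s, s \in S -> aff mu y C s -> aff lam x C s) ->
  (count (fun s => `[< aff mu y C s >]) S <= n)%N ->
  forall a b, a \in S -> b \in S -> aff mu y C a -> aff mu y C b ->
  reach (fun a b => delaunay_adj C S a b /\ segment a b `<=` homothet C lam x) a b.
Proof.
move=> Cg lam0; elim=> [|n IH] mu y mu0 HD hc a b aS bS Ha Hb.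
  have : (0 < count (fun s => `[< aff mu y C s >]) S)%N.
    by rewrite -has_count; apply/hasP; exists a => //; apply/asboolP.
  by move: hc; rewrite leqn0 => /eqP ->.
set K := aff mu y C.
have Kg : good K := good_aff _ _ _ mu0 Cg.
case: (pselect (a = b)) => [<-|ab]; first exact: rr.
case: (pselect (exists c, [/\ c \in S, K c, c <> a & c <> b])) => [[c [cS Kc ca cb]]|nc].
- have sub : forall t (w z : P), 0 < t -> (forall s, s \in S -> (aff t w K s <-> K s /\ s <> z)) ->
      z \in S -> K z -> forall p q, p \in S -> q \in S -> K p -> K q -> p <> z -> q <> z ->
      reach (fun a b => delaunay_adj C S a b /\ segment a b `<=` homothet C lam x) p q.
    move=> t w z t0 Ht zS Kz p q pS qS Kp Kq pz qz.
    have eq : forall k, aff t w K k <-> aff (t * mu) (t * y.1 + w.1, t * y.2 + w.2) C k.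
      by move=> k; rewrite /K; apply: aff_comp; rewrite gt_eqF.
    apply: (IH (t * mu) (t * y.1 + w.1, t * y.2 + w.2)).
    + exact: mulr_gt0.
    + move=> s sS /eq/(Ht s sS) [Ks _]; exact: HD.
    + rewrite -ltnS; apply: leq_trans hc.
      apply: (count_lt _ _ _ z) => //.
      * by move=> s sS /eq/(Ht s sS) [].
      * by move=> /eq/(Ht z zS) [].
    + exact: pS.
    + exact: qS.
    + by apply/eq/(Ht p pS).
    + by apply/eq/(Ht q qS).
  have [x1 [x1S Kx1 x1a [t1 [w1 [t10 H1]]]]] :=
    removeR _ _ _ _ Kg aS Ha bS Hb (fun h => ab (esym h)).
  have [x2 [x2S Kx2 x2x1 [t2 [w2 [t20 H2]]]]] :=
    removeR _ _ _ _ Kg x1S Kx1 aS Ha (fun h => x1a (esym h)).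
  have R1 := sub _ _ _ t10 H1 x1S Kx1.
  have R2 := sub _ _ _ t20 H2 x2S Kx2.
  have [w [wS Kw wx1 wx2]] : exists w, [/\ w \in S, K w, w <> x1 & w <> x2].
    case: (pselect (a = x2)) => [ax2|ax2]; last by exists a; split => // h; apply: x1a.
    case: (pselect (b = x1)) => [bx1|bx1].
    * exists c; split => //; first by rewrite -bx1.
      by rewrite -ax2.
    * by exists b; split => //; rewrite -ax2 => h; apply: ab.
  have viaW : forall p, p \in S -> K p ->
      reach (fun a b => delaunay_adj C S a b /\ segment a b `<=` homothet C lam x) p w /\
      reach (fun a b => delaunay_adj C S a b /\ segment a b `<=` homothet C lam x) w p.
    move=> p pS Kp; case: (pselect (p = x1)) => [px1|px1].
    + have px2 : p <> x2 by rewrite px1 => h; apply: x2x1; rewrite h.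
      by split; apply: R2.
    + by split; apply: R1.
  exact: reach_trans (viaW a aS Ha).1 (viaW b bS Hb).2.
- have lamn0 : lam != 0 by rewrite gt_eqF.
  have mun0 : mu != 0 by rewrite gt_eqF.
  apply: rs (rr _ b); split.
  + split => //; exists mu, y; split => //; split; first by apply/hom_mem.
    split; first by apply/hom_mem.
    move=> r rS /hom_mem -/(_ mun0) Kr.
    case: (pselect (r = a)) => [|ra]; first by left.
    case: (pselect (r = b)) => [|rb]; first by right.
    by exfalso; apply: nc; exists r.
  + move=> k [t [ht ->]]; apply/hom_mem => //.
    have [_ Dv _ _] := good_aff _ x _ lam0 Cg.
    by apply: Dv => //; apply: HD.
Qed.

End Geo.

Theorem mainTheorem18 (R : realType) (C : set (pt R)) (S : seq (pt R))
    (lam : R) (x : pt R) (p q : pt R) :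
  strictly_convex_body C ->
  uniq S ->
  general_position C S ->
  0 < lam ->
  p \in S -> q \in S -> p <> q ->
  (forall r, r \in S -> (boundary (homothet C lam x) r <-> (r = p \/ r = q))) ->
  exists vs : seq (pt R),
    last p vs = q /\
    forall i : nat, (i < size vs)%N ->
      delaunay_adj C S (nth p (p :: vs) i) (nth p (p :: vs) i.+1) /\
      segment (nth p (p :: vs) i) (nth p (p :: vs) i.+1) `<=` homothet C lam x.
Proof.
move=> Csc _ _ lam0 pS qS _ Hb.
have Cg := @good_C R C Csc.
have lamn0 : lam != 0 by rewrite gt_eqF.
have memD : forall k, boundary (homothet C lam x) k -> aff R lam x C k.
  move=> k [Hcl _]; have [Dc _ _ _] := @good_aff R lam x C lam0 Cg; apply: Dc => e e0.
  have [a [Ha h]] := @cl1 R _ _ Hcl e e0; exists a; split => //.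
  by apply/(@hom_mem R C lam x a lamn0).
have Dp := memD p ((Hb p pS).2 (or_introl erefl)).
have Dq := memD q ((Hb q qS).2 (or_intror erefl)).
have := @main_ind R C S lam x Cg lam0 (size S) lam x lam0 (fun _ _ h => h) (count_size _ _) p q pS qS Dp Dq.
by case/reach_list => vs [hl hv]; exists vs; split.
Qed.
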